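(* Let $H$ be a finite simple graph and let $G$ be a graph obtained from $H$ by proliferating some of its leaves. If $I(H)^{[k]}$ has linear quotients, then $I(G)^{[k]}$ has linear quotients.
   Context: Graph vertices are identified with variables of a polynomial ring over a field $K$, edges with degree-2 monomials. $I(H)^{[k]}$ is the ideal generated by all products $e_1\cdots e_k$ over $k$-matchings of $H$. Proliferating a leaf: if $a$ is a leaf (vertex of degree 1) of a graph with unique neighbour $b$, one adds new vertices $a_1,\ldots,a_t$ and new edges $\{a_1,b\},\ldots,\{a_t,b\}$ (so the $a_i$ are leaves); ''proliferating some leaves'' means applying this operation to some leaves. A monomial ideal has linear quotients if its minimal generators can be ordered $u_1,\ldots,u_m$ so that $(u_1,\ldots,u_{j-1}):u_j$ is generated by variables for each $j=2,\ldots,m$. *)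

(* Defs.v *)
(* Monomial ideals in K[x_v : v in X] are modelled by their
   sets of monomials (exponent vectors). *)
From mathcomp Require Import all_boot.
Set Implicit Arguments. Unset Strict Implicit. Unset Printing Implicit Defensive.

Section Defs.
Variable W : finType.

Definition mono := {ffun W -> nat}.
Definition mone : mono := [ffun=> 0].
Definition mdvd (m n : mono) : bool := [forall v, m v <= n v].
Definition mmul (m n : mono) : mono := [ffun v => m v + n v].
Definition supp_in (X : {set W}) (m : mono) : bool :=
  [forall v, (m v != 0) ==> (v \in X)].

Definition simple_graph (A : {set W}) (e : rel W) : Prop :=
  (forall x, ~~ e x x) /\ (forall x y, e x y = e y x) /\
  (forall x y, e x y -> (x \in A) && (y \in A)).

(* product of the edge monomials x_{p.1} x_{p.2} over p in M *)
Definition edges_mon (M : seq (W * W)) : mono :=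
  [ffun v => \sum_(p <- M) ((p.1 == v) + (p.2 == v))].

Definition is_kmatching (e : rel W) (k : nat) (M : seq (W * W)) : Prop :=
  size M = k /\ all (fun p => e p.1 p.2) M /\
  uniq (flatten [seq [:: p.1; p.2] | p <- M]).

(* the generating set of I(H)^[k] *)
Definition matching_gens (e : rel W) (k : nat) (m : mono) : Prop :=
  exists M, is_kmatching e k M /\ m = edges_mon M.

Definition min_gen (gens : mono -> Prop) (u : mono) : Prop :=
  gens u /\ forall g, gens g -> mdvd g u -> g = u.

Definition in_ideal_seq (s : seq mono) (m : mono) : bool :=
  has (fun g => mdvd g m) s.

(* (s) : u is generated by a set S of variables of K[x_v : v in X] *)
Definition colon_gen_by_vars (X : {set W}) (s : seq mono) (u : mono) : Prop :=
  exists S : {set W}, S \subset X /\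
    forall m, supp_in X m ->
      (in_ideal_seq s (mmul m u) <-> exists2 v, v \in S & 0 < m v).

Definition linear_quotients (X : {set W}) (gens : mono -> Prop) : Prop :=
  exists s : seq mono, uniq s /\ (forall u, u \in s <-> min_gen gens u) /\
    forall j, 0 < j < size s -> colon_gen_by_vars X (take j s) (nth mone s j).

Definition prolif_step (A : {set W}) (e : rel W) (A' : {set W}) (e' : rel W)
  : Prop :=
  exists (a b : W) (N : {set W}),
    [/\ a \in A, [set y | e a y] = [set b], [disjoint N & A],
        A' = A :|: N &
        forall x y, e' x y = [|| e x y, (x \in N) && (y == b)
                              | (y \in N) && (x == b)]].

Inductive proliferated (A : {set W}) (e : rel W) : {set W} -> rel W -> Prop :=
| prolif_refl : proliferated A e A e
| prolif_more A1 e1 A2 e2 :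
    proliferated A e A1 e1 -> prolif_step A1 e1 A2 e2 -> proliferated A e A2 e2.

End Defs.

(* Main.v *)
Require Import Defs.
From mathcomp Require Import all_boot zify.
Set Implicit Arguments. Unset Strict Implicit. Unset Printing Implicit Defensive.


Section Generic.
Variable W : finType.

Lemma mdvdP (m n : mono W) : reflect (forall v, m v <= n v) (mdvd m n).
Proof. exact: forallP. Qed.

Lemma mmulE (m n : mono W) v : mmul m n v = m v + n v.
Proof. by rewrite ffunE. Qed.

Definition fl (M : seq (W * W)) := flatten [seq [:: p.1; p.2] | p <- M].

Lemma count_fl (P : pred W) M :
  count P (fl M) = \sum_(p <- M) (P p.1 + P p.2).
Proof.
elim: M => [|p M IH]; first by rewrite big_nil.
rewrite big_cons -IH /fl /=; lia.
Qed.

Lemma edges_monE M v : edges_mon M v = count_mem v (fl M).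
Proof.
by rewrite ffunE count_fl.
Qed.

Lemma uniq_count_le1 (T : eqType) (s : seq T) :
  uniq s <-> (forall x, count_mem x s <= 1).
Proof.
elim: s => [|y s IH] //=; split.
- move=> /andP [ys us] x /=.
  case: (eqVneq y x) => [<-|nx] /=.
    by rewrite add1n ltnS leqn0; apply/eqP/count_memPn.
  by rewrite add0n; apply IH.
- move=> H; apply/andP; split.
    apply/negP => ys; have := H y; rewrite eqxx /= add1n ltnS leqn0.
    by move/eqP/count_memPn; rewrite ys.
  apply/IH => x; have := H x; lia.
Qed.

Lemma uniq_fl_le1 M : uniq (fl M) <-> (forall v, edges_mon M v <= 1).
Proof.
rewrite uniq_count_le1; split => H v; by rewrite ?edges_monE; move: (H v); rewrite ?edges_monE.
Qed.

Lemma sum_eq1 (x : W) : \sum_(v : W) (x == v : nat) = 1.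
Proof.
rewrite (bigD1 x) //= eqxx big1 // => v; rewrite eq_sym => /negbTE -> //.
Qed.

Lemma deg_edges_mon M : \sum_(v : W) edges_mon M v = 2 * size M.
Proof.
under eq_bigr => v _ do rewrite ffunE.
rewrite exchange_big /=.
elim: M => [|p M IH]; first by rewrite big_nil.
rewrite big_cons IH big_split /= !sum_eq1 /=; lia.
Qed.

Lemma mono_eq_dvd (g u : mono W) : mdvd g u ->
  \sum_(v : W) g v = \sum_(v : W) u v -> g = u.
Proof.
move=> /mdvdP H E.
have E2 : \sum_(v : W) u v = \sum_(v : W) g v + \sum_(v : W) (u v - g v).
  rewrite -big_split; apply: eq_bigr => v _ /=; have := H v; lia.
have : \sum_(v : W) (u v - g v) == 0 by apply/eqP; lia.
rewrite sum_nat_eq0 => /forallP Z; apply/ffunP => v.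
have := Z v; have := H v; move=> /= h /eqP; lia.
Qed.

Lemma gens_min (e : rel W) k u : matching_gens e k u -> min_gen (matching_gens e k) u.
Proof.
move=> Hu; split => // g [Mg [[sg _] ->]] dv.
case: Hu dv => Mu [[su _] ->] dv; apply: mono_eq_dvd => //.
by rewrite !deg_edges_mon sg su.
Qed.

Lemma gens_le1 (e : rel W) k u : matching_gens e k u -> forall v, u v <= 1.
Proof. by move=> [M [[_ [_ U]] ->]]; apply/uniq_fl_le1. Qed.

End Generic.


Lemma map_split (S T : Type) (f : S -> T) s P y Q :
  map f s = P ++ y :: Q ->
  exists s1 x s2, [/\ s = s1 ++ x :: s2, P = map f s1 & y = f x].
Proof.
elim: P s => [|p P IH] [|x s] //=; try by [].
- by move=> E; exists [::], x, s; split => //; case: E.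
- move=> E; have E1 : f x = p by case: E.
  have : map f s = P ++ y :: Q by case: E.
  move=> /IH [s1 [x' [s2 [-> -> ->]]]].
  by exists (x :: s1), x', s2; rewrite /= E1.
Qed.

Lemma flatten_split (T : Type) (ss : seq (seq T)) P g Q :
  flatten ss = P ++ g :: Q ->
  exists ss1 b1 b2 ss2, ss = ss1 ++ (b1 ++ g :: b2) :: ss2 /\ P = flatten ss1 ++ b1.
Proof.
elim: ss P => [|x ss IH] P /=; first by case: P.
move=> E.
case: (ltnP (size P) (size x)) => hs.
- have Tk : take (size P) x = P.
    by have := congr1 (take (size P)) E; rewrite take_cat hs take_size_cat.
  have Nt : nth g x (size P) = g.
    by have := congr1 (fun s => nth g s (size P)) E; rewrite /= !nth_cat hs ltnn subnn.
  exists [::], P, (drop (size P).+1 x), ss; split => //.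
  by rewrite -{1}(cat_take_drop (size P) x) (drop_nth g hs) Tk Nt.
- have Dp : flatten ss = drop (size x) P ++ g :: Q.
    have := congr1 (drop (size x)) E; rewrite drop_size_cat // drop_cat.
    case: ltnP => h // ; have Es : size x = size P by move: hs h; lia.
    by rewrite Es subnn drop0 drop_size.
  have Tp : P = x ++ drop (size x) P.
    have := congr1 (take (size x)) E; rewrite take_size_cat // takel_cat // => Ex.
    by rewrite {1}Ex cat_take_drop.
  case: (IH _ Dp) => [ss1 [b1 [b2 [ss2 [-> Hd]]]]].
  exists (x :: ss1), b1, b2, ss2; split => //=.
  by rewrite -catA -Hd -Tp.
Qed.

Lemma uniq_flatten_map (S T : eqType) (f : S -> seq T) (pi : T -> S) s :
  (forall x y, x \in s -> y \in f x -> pi y = x) -> (forall x, x \in s -> uniq (f x)) -> uniq s ->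
  uniq (flatten (map f s)).
Proof.
elim: s => [|x s IH] //= Hp Hu /andP [xs us].
rewrite cat_uniq Hu ?mem_head // IH //; last first.
- by move=> z zs; apply: Hu; rewrite in_cons zs orbT.
- by move=> z y zs; apply: Hp; rewrite in_cons zs orbT.
rewrite andbT; apply/hasPn => y /flatten_mapP [x' x's yx'].
apply/negP => yx; have := Hp _ _ (mem_head _ _) yx.
rewrite (Hp _ _ _ yx'); last by rewrite in_cons x's orbT.
by move=> E; move: xs; rewrite -E x's.
Qed.

Section LQ.
Variable W : finType.

Lemma lq_dec (X : {set W}) (s : seq (mono W)) :
  (forall j, 0 < j < size s -> colon_gen_by_vars X (take j s) (nth (mone W) s j)) ->
  forall s1 u s2, s = s1 ++ u :: s2 ->
  exists L : {set W}, L \subset X /\ forall m, supp_in X m ->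
    (in_ideal_seq s1 (mmul m u) <-> exists2 v, v \in L & 0 < m v).
Proof.
move=> H s1 u s2 E.
case: s1 E => [|x s1] E.
  exists set0; split; first exact: sub0set.
  by move=> m _; split => //; case=> v; rewrite in_set0.
have := H (size (x :: s1)); rewrite E take_size_cat // nth_cat ltnn subnn /=.
by apply; rewrite size_cat /=; lia.
Qed.

Lemma lq_of_dec (X : {set W}) (s : seq (mono W)) :
  (forall s1 u s2, s = s1 ++ u :: s2 -> s1 != [::] -> colon_gen_by_vars X s1 u) ->
  forall j, 0 < j < size s -> colon_gen_by_vars X (take j s) (nth (mone W) s j).
Proof.
move=> H j /andP [j0 js]; apply: (H _ _ (drop j.+1 s)).
  by rewrite -drop_nth // cat_take_drop.
by rewrite -size_eq0 size_take js; lia.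
Qed.
End LQ.


Section Step.
Variable W : finType.
Variables (A : {set W}) (e : rel W) (A' : {set W}) (e' : rel W) (a b : W) (N : {set W}).
Hypothesis sg : simple_graph A e.
Hypothesis aA : a \in A.
Hypothesis nb : [set y | e a y] = [set b].
Hypothesis dNA : [disjoint N & A].
Hypothesis eA' : A' = A :|: N.
Hypothesis e'E : forall x y, e' x y = [|| e x y, (x \in N) && (y == b) | (y \in N) && (x == b)].

Lemma eab : e a b.
Proof. have : b \in [set y | e a y] by rewrite nb set11. by rewrite inE. Qed.

Lemma ea_b y : e a y -> y = b.
Proof. move=> h; have : y \in [set y | e a y] by rewrite inE. by rewrite nb inE => /eqP. Qed.

Lemma e_in x y : e x y -> (x \in A) && (y \in A).
Proof. by case: sg => _ [_ ]; apply. Qed.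

Lemma bA : b \in A.
Proof. by case/andP: (e_in eab). Qed.

Lemma NnA x : x \in N -> x \notin A.
Proof. by move=> xN; rewrite (disjointFr dNA xN). Qed.

Lemma aN : a \notin N.
Proof. by apply/negP => /NnA; rewrite aA. Qed.

Lemma bN : b \notin N.
Proof. by apply/negP => /NnA; rewrite bA. Qed.

Lemma ab : a != b.
Proof. by apply/eqP => E; case: sg => irr _; have := irr a; rewrite {2}E eab. Qed.

Definition C := a |: N.
Definition F x := if x \in N then a else x.
Definition sig (c : W) (u : mono W) : mono W :=
  [ffun v => if v == c then u a else if v == a then 0 else u v].
Definition pim (x : mono W) : mono W :=
  [ffun v => if v \in N then 0 else if v == a then \sum_(d in C) x d else x v].
Definition xv (v : W) : mono W := [ffun w => nat_of_bool (w == v)].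
Definition cs := a :: enum N.

Definition suppA (u : mono W) := forall v, v \notin A -> u v = 0.

Lemma memC x : (x \in C) = (x == a) || (x \in N).
Proof. by rewrite !inE. Qed.

Lemma mem_cs x : (x \in cs) = (x \in C).
Proof. by rewrite in_cons mem_enum memC. Qed.

Lemma uniq_cs : uniq cs.
Proof. by rewrite /= mem_enum aN enum_uniq. Qed.

Lemma C_A x : x \in C -> x \in A -> x = a.
Proof. by rewrite memC => /orP [/eqP //| /NnA /negbTE ->]. Qed.

Lemma sumC_eq1 x : \sum_(d in C) (x == d : nat) = (x \in C).
Proof.
case: (boolP (x \in C)) => xC.
  rewrite (bigD1 x) //= eqxx big1 // => d /andP [_]; rewrite eq_sym => /negbTE -> //.
by rewrite big1 // => d dC; case: eqP => // E; move: xC; rewrite E dC.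
Qed.

Lemma sumC_supp u : suppA u -> \sum_(d in C) u d = u a.
Proof.
move=> su; rewrite (bigD1 a) ?memC ?eqxx //= big1 ?addn0 // => d /andP [dC da].
apply: su; apply/negP => dA; move/eqP: da; apply; exact: C_A.
Qed.

Lemma sigE c u v : sig c u v = if v == c then u a else if v == a then 0 else u v.
Proof. by rewrite ffunE. Qed.

Lemma sig_a u : sig a u = u.
Proof. by apply/ffunP => v; rewrite sigE; case: eqP => // ->. Qed.

Lemma sig_id c u : suppA u -> u a = 0 -> c \in C -> sig c u = u.
Proof.
move=> su ua cC; apply/ffunP => v; rewrite sigE.
case: eqP => [->|vc]; last by case: eqP => // ->.
rewrite ua; move: cC; rewrite memC => /orP [/eqP -> //|/NnA cA]; by rewrite su.
Qed.

Lemma sig_mul c x y : sig c (mmul x y) = mmul (sig c x) (sig c y).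
Proof. by apply/ffunP => v; rewrite !(sigE, mmulE); case: ifP => //; case: ifP. Qed.

Lemma sig_dvd c x y : mdvd x y -> mdvd (sig c x) (sig c y).
Proof. move/mdvdP => H; apply/mdvdP => v; rewrite !sigE; case: ifP => //; case: ifP => //. Qed.

Lemma sig_xv c v : v \in A -> (v != a) || (c == a) -> c \in C -> sig c (xv v) = xv v.
Proof.
move=> vA /orP [va|/eqP ->]; last by rewrite sig_a.
move=> cC; apply/ffunP => w; rewrite sigE !ffunE.
case: (eqVneq w c) => [->|wc].
  rewrite eq_sym (negbTE va); case: eqP => // cv; move: va.
  by rewrite -cv (C_A cC) ?eqxx // cv.
by case: eqP => // ->; rewrite eq_sym (negbTE va).
Qed.

Lemma sig_xva v : v \in N -> sig v (xv a) = xv v.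
Proof.
move=> vN; apply/ffunP => w; rewrite sigE !ffunE eqxx.
by case: (boolP (w == v)) => //= _; case: (w == a).
Qed.

Lemma pimE x v : pim x v = if v \in N then 0 else if v == a then \sum_(d in C) x d else x v.
Proof. by rewrite ffunE. Qed.

Lemma pim_mul x y : pim (mmul x y) = mmul (pim x) (pim y).
Proof.
apply/ffunP => v; rewrite !(pimE, mmulE); case: ifP => //; case: ifP => // _ _.
by rewrite -big_split; apply: eq_bigr => d _; rewrite mmulE.
Qed.

Lemma pim_dvd x y : mdvd x y -> mdvd (pim x) (pim y).
Proof.
move/mdvdP => H; apply/mdvdP => v; rewrite !pimE; case: ifP => //; case: ifP => // _ _.
by apply: leq_sum => d _.
Qed.

Lemma pim_supp x : suppA x -> pim x = x.
Proof.
move=> sx; apply/ffunP => v; rewrite pimE; case: ifP => [vN|_]; first by rewrite sx ?NnA.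
by case: eqP => [->|//]; rewrite sumC_supp.
Qed.

Lemma sig_supp c u : suppA u -> c \in C -> forall v, v \notin A -> v != c -> sig c u v = 0.
Proof.
move=> su cC v vA vc; rewrite sigE (negbTE vc); case: ifP => // _; exact: su.
Qed.

Lemma pim_sig c u : suppA u -> c \in C -> pim (sig c u) = u.
Proof.
move=> su cC; apply/ffunP => v; rewrite pimE.
case: ifP => [vN|vN].
  rewrite su ?NnA //.
case: eqP => [->|va].
  rewrite (bigD1 c) //= sigE eqxx big1 ?addn0 // => d /andP [dC dc].
  rewrite sigE (negbTE dc); case: ifP => // da; apply: su; apply/negP => dA.
  by move: da; rewrite (C_A dC dA) eqxx.
rewrite sigE; case: eqP => [vc|_]; last by case: eqP.
by move: cC; rewrite memC -vc vN orbF => /eqP.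
Qed.

Lemma pim_suppA m : supp_in A' m -> suppA (pim m).
Proof.
move=> /forallP sm v vA; rewrite pimE; case: ifP => // vN.
case: eqP => [va|_]; first by move: vA; rewrite va aA.
have := sm v; rewrite eA' inE (negbTE vA) vN /=; by case: eqP.
Qed.

Lemma gensA k u : matching_gens e k u -> suppA u.
Proof.
move=> [M [[_ [He _]] ->]] v vA; rewrite ffunE big1_seq // => p /andP [_ pM].
have /e_in /andP [h1 h2] := allP He p pM.
by case: eqP => [E|_]; [move: vA; rewrite -E h1|case: eqP => [E|//]; move: vA; rewrite -E h2].
Qed.

Lemma e'sym x y : e' x y = e' y x.
Proof.
case: sg => _ [sym _]; rewrite !e'E (sym y x).
by case: (e x y); case: (x \in N); case: (y \in N); case: (x == b); case: (y == b).
Qed.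

Lemma bC : b \notin C.
Proof. by rewrite memC negb_or eq_sym ab bN. Qed.

Lemma eC x y : e' x y -> x \in C -> y = b.
Proof.
rewrite e'E memC => h /orP [/eqP xa|xN].
  by move: h; rewrite xa (negbTE aN) /= (negbTE ab) andbF !orbF; apply: ea_b.
move: h; rewrite xN /=; case: (boolP (e x y)) => [/e_in /andP [xA _]|_ /=]; first by move: (NnA xN); rewrite xA.
case/orP => [/eqP //|/andP [_ /eqP xb]]; by move: bN; rewrite -xb xN.
Qed.

Lemma eC' x y : e' x y -> y \in C -> x = b.
Proof. by rewrite e'sym; apply: eC. Qed.

Lemma sgG : simple_graph A' e'.
Proof.
case: sg => irr [sym ein]; split; last split.
- move=> x; rewrite e'E (negbTE (irr x)) /= orbb; apply/negP => /andP [xN /eqP xb].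
  by move: bN; rewrite -xb xN.
- exact: e'sym.
- move=> x y; rewrite e'E eA' !inE => /or3P [/ein /andP [-> ->]|/andP [-> /eqP ->]|/andP [-> /eqP ->]];
  by rewrite ?bA ?orbT.
Qed.

Lemma eF x y : e' x y -> e (F x) (F y).
Proof.
move=> h; rewrite /F.
case: (boolP (x \in N)) => xN.
  have yb := eC h (setU1r _ xN); by rewrite yb (negbTE bN) eab.
case: (boolP (y \in N)) => yN.
  have xb := eC' h (setU1r _ yN); by case: sg => _ [-> _]; rewrite xb eab.
by move: h; rewrite e'E (negbTE xN) (negbTE yN) /= !orbF.
Qed.

Lemma FeqE x v : (F x == v) = if v \in N then false else if v == a then x \in C else x == v.
Proof.
rewrite /F memC; case: (boolP (x \in N)) => xN; case: (boolP (v \in N)) => vN //=.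
- apply/negbTE/eqP => E; move: vN; rewrite -E (negbTE aN); by [].
- case: (boolP (v == a)) => va; first by rewrite orbT eq_sym.
  rewrite eq_sym (negbTE va); apply/esym/negbTE/eqP => E; move: xN; rewrite E (negbTE vN); by [].
- apply/negbTE/eqP => E; move: xN; rewrite E vN; by [].
- by rewrite orbF; case: (boolP (v == a)) => // /eqP ->.
Qed.

Lemma edges_monF M v :
  edges_mon [seq (F p.1, F p.2) | p <- M] v = pim (edges_mon M) v.
Proof.
rewrite ffunE big_map pimE /=.
under eq_bigr => p _ do rewrite !FeqE.
case: ifP => vN; first by rewrite big1.
case: eqP => va; last by rewrite ffunE.
under [X in _ = X]eq_bigr => d _ do rewrite ffunE.
rewrite exchange_big /=; apply: eq_bigr => p _.
by rewrite big_split /= !sumC_eq1.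
Qed.

Lemma sumC_le1 k g : matching_gens e' k g -> \sum_(d in C) g d <= 1.
Proof.
move=> [M [[_ [He Hu]] ->]].
have HM : \sum_(d in C) edges_mon M d = \sum_(p <- M) ((p.1 \in C) + (p.2 \in C)).
  under eq_bigr => d _ do rewrite ffunE.
  by rewrite exchange_big /=; apply: eq_bigr => p _; rewrite big_split /= !sumC_eq1.
rewrite HM; apply: leq_trans (_ : edges_mon M b <= 1); last exact: (proj1 (uniq_fl_le1 M) Hu b).
rewrite ffunE big_seq [X in _ <= X]big_seq; apply: leq_sum => p pM.
have h := allP He p pM.
case: (boolP (p.1 \in C)) => h1.
  have := eC h h1 => ->; rewrite (negbTE bC) eqxx /=; lia.
case: (boolP (p.2 \in C)) => h2 //.
have := eC' h h2 => ->; rewrite eqxx /=; lia.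
Qed.

Lemma pi_gen k g : matching_gens e' k g -> matching_gens e k (pim g).
Proof.
move=> Hg; have S1 := sumC_le1 Hg.
case: Hg S1 => M [[sM [He Hu]] ->] S1.
exists [seq (F p.1, F p.2) | p <- M]; split; last by apply/ffunP => v; rewrite edges_monF.
split; first by rewrite size_map.
split.
  by apply/allP => q /mapP [p pM ->] /=; apply: eF; apply: (allP He).
apply/uniq_fl_le1 => v; rewrite edges_monF pimE.
case: ifP => // _; case: ifP => // _.
exact: (proj1 (uniq_fl_le1 M) Hu v).
Qed.

Definition Gc (c x : W) := if x == a then c else x.

Lemma GeqE c x v : c \in C -> x \in A ->
  (Gc c x == v) = if v == c then x == a else if v == a then false else x == v.
Proof.
move=> cC xA; rewrite /Gc.
case xa: (x == a).
  move/eqP: xa => ->; case vc: (v == c); first by rewrite eq_sym vc.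
  by rewrite eq_sym vc; case va: (v == a); rewrite // eq_sym va.
case vc: (v == c).
  move/eqP: vc => ->; apply/negbTE/eqP => E; move: xa; rewrite E in xA *.
  by rewrite (C_A cC xA) eqxx.
case va: (v == a) => //; move/eqP: va => ->; by rewrite xa.
Qed.

Lemma lift_gen k u c : matching_gens e k u -> c \in C -> matching_gens e' k (sig c u).
Proof.
move=> Hu0 cC; have le1 := gens_le1 Hu0.
case: Hu0 le1 => M [[sM [He Hu]] ->] le1.
have EM : forall v, edges_mon [seq (Gc c p.1, Gc c p.2) | p <- M] v = sig c (edges_mon M) v.
  move=> v; rewrite ffunE big_map sigE /= !ffunE.
  case: ifP => vc.
    apply: eq_big_seq => p pM; have /e_in /andP [h1 h2] := allP He p pM.
    by rewrite !GeqE // vc.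
  case: ifP => va.
    rewrite big1_seq // => p /andP [_ pM]; have /e_in /andP [h1 h2] := allP He p pM.
    by rewrite !GeqE // vc va.
  apply: eq_big_seq => p pM; have /e_in /andP [h1 h2] := allP He p pM.
  by rewrite !GeqE // vc va.
exists [seq (Gc c p.1, Gc c p.2) | p <- M]; split; last by apply/ffunP => v; rewrite EM.
split; first by rewrite size_map.
split.
  apply/allP => q /mapP [p pM ->] /=; have h := allP He p pM.
  rewrite /Gc; case: (eqVneq p.1 a) => [E1|n1].
    move: h; rewrite E1 => /ea_b ->; rewrite eq_sym (negbTE ab) e'E.
    by move: cC; rewrite memC => /orP [/eqP ->|->]; rewrite ?eab ?eqxx ?orbT.
  case: (eqVneq p.2 a) => [E2|n2].
    move: h; case: sg => _ [-> _]; rewrite E2 => /ea_b ->; rewrite e'E.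
    by move: cC; rewrite memC => /orP [/eqP ->|->]; rewrite ?eab ?eqxx ?orbT //; case: sg => _ [-> _]; rewrite eab.
  by rewrite e'E h.
apply/uniq_fl_le1 => v; rewrite EM sigE; case: ifP => _; first exact: le1.
by case: ifP => // _; apply: le1.
Qed.

Lemma genG k g : matching_gens e' k g <->
  exists u c, [/\ matching_gens e k u, c \in C & g = sig c u].
Proof.
split; last by case=> u [c [Hu cC ->]]; apply: lift_gen.
move=> Hg; have S1 := sumC_le1 Hg; have Hp := pi_gen Hg.
have sgA : forall v, v \notin A' -> g v = 0.
  move=> v vA; case: Hg {S1 Hp} => M [[_ [He _]] ->]; rewrite ffunE big1_seq // => p /andP [_ pM].
  have /(proj2 (proj2 sgG)) /andP [h1 h2] := allP He p pM.
  by case: eqP => [E|_]; [move: vA; rewrite -E h1|case: eqP => [E|//]; move: vA; rewrite -E h2].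
case: (pickP [pred d | (d \in C) && (0 < g d)]) => [d /andP [dC gd]|H0].
- exists (pim g), d; split => //.
  have Hr : \sum_(d' in C | d' != d) g d' = 0.
    by move: S1; rewrite (bigD1 d) //=; lia.
  have Z : forall d', d' \in C -> d' != d -> g d' = 0.
    move=> d' d'C nd; move/eqP: Hr; rewrite sum_nat_eq0 => /forallP /(_ d').
    by rewrite d'C nd /= => /eqP.
  have gd1 : g d = 1 by move: S1; rewrite (bigD1 d) //=; lia.
  apply/ffunP => v; rewrite sigE pimE.
  case: (eqVneq v d) => [->|vd].
    rewrite gd1 (negbTE aN) eqxx (bigD1 d) //= gd1 -/(\sum_(d' in C | d' != d) g d') Hr //.
  case: (boolP (v == a)) => [/eqP va|va].
    by rewrite va in vd *; rewrite Z ?memC ?eqxx.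
  rewrite pimE (negbTE va); case: ifP => vN //; by rewrite Z // memC vN orbT.
- exists (pim g), a; split => //; first by rewrite memC eqxx.
  rewrite sig_a; apply/ffunP => v; rewrite pimE.
  have Z : forall d', d' \in C -> g d' = 0.
    move=> d' d'C; have := H0 d'; rewrite /= d'C /=; lia.
  case: ifP => vN; first by rewrite Z // memC vN orbT.
  case: eqP => [->|//]; rewrite Z ?memC ?eqxx // big1 //.
Qed.

Definition blk (u : mono W) : seq (mono W) :=
  if u a == 0 then [:: u] else [seq sig c u | c <- cs].

Lemma blk_mem u g : suppA u -> (g \in blk u) <-> exists2 c, c \in C & g = sig c u.
Proof.
move=> su; rewrite /blk; case: ifP => [/eqP ua|ua].
  rewrite inE; split => [/eqP ->|[c cC ->]].
    by exists a; [rewrite memC eqxx | rewrite sig_a].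
  by rewrite sig_id.
split => [/mapP [c cc ->]|[c cC ->]].
  by exists c; rewrite // -mem_cs.
by apply/mapP; exists c; rewrite ?mem_cs.
Qed.

Lemma blk_uniq u : suppA u -> uniq (blk u).
Proof.
move=> su; rewrite /blk; case: ifP => // /negbT ua.
rewrite map_inj_in_uniq ?uniq_cs // => c c' cc cc' E.
have := congr1 (fun f : mono W => f c) E; rewrite !sigE eqxx.
case: eqP => // ncc; case: ifP => [_ /eqP|ca]; first by rewrite (negbTE ua).
move=> E2; move: ua; rewrite E2 su //; move: cc; rewrite mem_cs memC ca /=; exact: NnA.
Qed.

Lemma blk_pim u g : suppA u -> g \in blk u -> pim g = u.
Proof. by move=> su /(blk_mem _ su) [c cC ->]; apply: pim_sig. Qed.

Lemma suppA_in x : suppA x -> supp_in A x.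
Proof.
move=> sx; apply/forallP => v; apply/implyP => nz; apply/negPn/negP => vA.
by move: nz; rewrite sx.
Qed.

Lemma xv_supp v : v \in A -> supp_in A (xv v).
Proof. by move=> vA; apply: suppA_in => w wA; rewrite ffunE; case: eqP => // E; move: wA; rewrite E vA. Qed.

Lemma mdvd_trans (x y z : mono W) : mdvd x y -> mdvd y z -> mdvd x z.
Proof. move=> /mdvdP h1 /mdvdP h2; apply/mdvdP => v; exact: leq_trans (h1 v) (h2 v). Qed.

Lemma xv_dvd (m g : mono W) v : 0 < m v -> mdvd (mmul (xv v) g) (mmul m g).
Proof.
move=> mv; apply/mdvdP => w; rewrite !mmulE ffunE leq_add2r.
by case: eqP => // ->.
Qed.

Lemma pos_of_le x y : x != 0 -> x <= y -> 0 < y.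
Proof. lia. Qed.

Lemma gens_deg k u : matching_gens e k u -> \sum_(v : W) u v = 2 * k.
Proof. by move=> [M [[sM _] ->]]; rewrite deg_edges_mon sM. Qed.

Lemma step_LQ k : linear_quotients A (matching_gens e k) ->
  linear_quotients A' (matching_gens e' k).
Proof using sg aA nb dNA eA' e'E.
case=> s [us [ms lq]].
have gs : forall u, u \in s <-> matching_gens e k u.
  move=> u; rewrite ms; split; [by case | exact: gens_min].
have sA : forall u, u \in s -> suppA u by move=> u /gs; apply: gensA.
exists (flatten (map blk s)); split; [|split].
- apply: (uniq_flatten_map (pi := pim)) => //.
    by move=> x y xs; apply: blk_pim; apply: sA.
  by move=> x xs; apply: blk_uniq; apply: sA.
- move=> g; have -> : min_gen (matching_gens e' k) g <-> matching_gens e' k g.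
    by split; [case | exact: gens_min].
  rewrite genG; split.
    move=> /flatten_mapP [u uS /(blk_mem _ (sA _ uS)) [c cC ->]].
    by exists u, c; split => //; apply/gs.
  case=> u [c [Hu cC ->]]; apply/flatten_mapP; exists u; first by apply/gs.
  by apply/(blk_mem _ (gensA Hu)); exists c.
apply: lq_of_dec => P g Q E Pn.
case: (flatten_split E) => ss1 [b1 [b2 [ss2 [Ess EP]]]].
case: (map_split Ess) => s1 [u [s2 [Es Es1 Eb]]].
have uS : u \in s by rewrite Es mem_cat mem_head orbT.
have uH := proj1 (gs u) uS.
have suA := sA u uS.
have le1 := gens_le1 uH.
have uns1 : u \notin s1.
  by move: us; rewrite Es cat_uniq => /and3P [_ /hasPn /(_ u (mem_head _ _))].
have [cs1 [c [[cC Eg] Eb1 scs ncs ua0]]] : exists cs1 c, [/\ c \in C /\ g = sig c u,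
    b1 = map (sig^~ u) cs1, {subset cs1 <= C}, c \notin cs1 &
    (u a = 0 -> cs1 = [::] /\ c = a)].
  move: Eb; rewrite /blk; case: ifP => [/eqP ua|/negbT ua] Eb.
    case: b1 Eb {EP Ess E} => [|x b1] /=; last by case: b1 => [|? ?] [].
    case=> -> _; exists [::], a; split => //; by rewrite ?memC ?eqxx ?sig_a.
  case: (map_split (esym Eb)) => cs1 [c [cs2 [Ecs Eb1 Eg]]].
  have ucs := uniq_cs; rewrite Ecs cat_uniq /= in ucs.
  case/and3P: ucs => _ /norP [ncs _] _.
  exists cs1, c; split => //.
  - by split => //; rewrite -mem_cs Ecs mem_cat mem_head orbT.
  - by move=> x xc; rewrite -mem_cs Ecs mem_cat xc.
  - by move=> ua0; move: ua; rewrite ua0.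
have [L [LA HL]] := lq_dec lq Es.
have aL0 : a \in L -> u a = 0.
  move=> aL; apply/eqP; apply/negP => /negP ua.
  have : in_ideal_seq s1 (mmul (xv a) u).
    apply/(HL _ (xv_supp aA)); exists a => //; by rewrite ffunE eqxx.
  case/hasP => up ups dv.
  have upH : matching_gens e k up by apply/gs; rewrite Es mem_cat ups.
  have : up = u.
    apply: mono_eq_dvd; last by rewrite (gens_deg upH) (gens_deg uH).
    apply/mdvdP => w; move/mdvdP: dv => /(_ w); rewrite mmulE ffunE.
    case: eqP => [->|_] // _; apply: leq_trans (gens_le1 upH a) _; by rewrite lt0n.
  by move=> E1; move: uns1; rewrite -E1 ups.
exists (L :|: (if a \in L then N else set0) :|: [set x in cs1]); split.
  apply/subsetP => x; rewrite eA' !inE => /orP [/orP [xL|xI]|xcs].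
  - by rewrite (subsetP LA x xL).
  - by case: ifP xI => _; rewrite ?inE // => ->; rewrite orbT.
  - by move: (scs x xcs); rewrite memC => /orP [/eqP ->|->]; rewrite ?aA ?orbT.
move=> m sm; rewrite EP Es1; split.
- move=> /hasP [h]; rewrite mem_cat => /orP [/flatten_mapP [up ups hb] | hb1] hd.
  + have upS : up \in s by rewrite Es mem_cat ups.
    have : in_ideal_seq s1 (mmul (pim m) u).
      apply/hasP; exists up => //.
      rewrite -(blk_pim (sA _ upS) hb) -(pim_sig suA cC) -Eg -pim_mul.
      exact: pim_dvd.
    move/(HL _ (suppA_in (pim_suppA sm))) => [v vL mv].
    have vA := subsetP LA v vL.
    move: mv; rewrite pimE; case: ifP => vN; first by [].
    case: eqP => [va|_] mv; last by exists v => //; rewrite !inE vL.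
    case: (pickP [pred d | (d \in C) && (0 < m d)]) => [d /andP [dC md]|H0]; last first.
      move: mv; rewrite big1 // => d dC; have := H0 d; rewrite /= dC /= => /negbT; by rewrite lt0n negbK => /eqP.
    exists d => //; rewrite !inE; move: dC; rewrite memC => /orP [/eqP ->|dN].
      by rewrite -va vL.
    by rewrite -va vL dN orbT.
  + move: hb1; rewrite Eb1 => /mapP [c' c'cs Eh].
    have ua : u a != 0 by apply/eqP => /ua0 [E1 _]; move: c'cs; rewrite E1.
    exists c'; first by rewrite !inE c'cs orbT.
    move/mdvdP: hd => /(_ c'); rewrite Eh Eg mmulE !sigE eqxx.
    have -> : (c' == c) = false by apply/negbTE/eqP => E1; move: ncs; rewrite -E1 c'cs.
    case: ifP => c'a; first by rewrite addn0; apply: pos_of_le.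
    have c'N : c' \in N by move: (scs c' c'cs); rewrite memC c'a.
    by rewrite (suA c' (NnA c'N)) addn0; apply: pos_of_le.
- case=> v vS mv; apply/hasP.
  suff [h hP hd] : exists2 h, h \in flatten (map blk s1) ++ b1 & mdvd h (mmul (xv v) g).
    by exists h => //; apply: mdvd_trans hd (xv_dvd _ mv).
  move: vS; rewrite !inE => /orP [/orP [vL|vI]|vcs].
  + have vA := subsetP LA v vL.
    have : in_ideal_seq s1 (mmul (xv v) u).
      apply/(HL _ (xv_supp vA)); exists v => //; by rewrite ffunE eqxx.
    case/hasP => up ups dv.
    have upS : up \in s by rewrite Es mem_cat ups.
    exists (sig c up).
      rewrite mem_cat; apply/orP; left; apply/flatten_mapP; exists up => //.
      by apply/(blk_mem _ (sA _ upS)); exists c.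
    have vac : (v != a) || (c == a).
      case: (eqVneq v a) => [va|//]; rewrite /=.
      have aL : a \in L by rewrite -va.
      by have [_ ->] := ua0 (aL0 aL).
    rewrite Eg -(sig_xv vA vac cC) -sig_mul; exact: sig_dvd.
  + case aL: (a \in L) vI; last by rewrite inE.
    move=> vN; have [_ ca] := ua0 (aL0 aL).
    have : in_ideal_seq s1 (mmul (xv a) u).
      apply/(HL _ (xv_supp aA)); exists a => //; by rewrite ffunE eqxx.
    case/hasP => up ups dv.
    have upS : up \in s by rewrite Es mem_cat ups.
    have vC : v \in C by rewrite memC vN orbT.
    exists (sig v up).
      rewrite mem_cat; apply/orP; left; apply/flatten_mapP; exists up => //.
      by apply/(blk_mem _ (sA _ upS)); exists v.
    rewrite Eg ca sig_a -(sig_xva vN) -(sig_id suA (aL0 aL) vC) -sig_mul.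
    exact: sig_dvd.
  + have ua : u a != 0 by apply/eqP => /ua0 [E1 _]; move: vcs; rewrite E1.
    exists (sig v u); first by rewrite mem_cat Eb1 (map_f (fun c0 => sig c0 u) vcs) orbT.
    rewrite Eg; apply/mdvdP => w; rewrite mmulE !sigE ffunE.
    case: (eqVneq w v) => [->|wv] /=; first by apply: leq_trans (le1 a) _; exact: leq_addr.
    case wa: (w == a) => //; rewrite add0n.
    case wc: (w == c) => //.
    have cN : c \in N.
      by move: cC; rewrite memC => /orP [/eqP E1|//]; move: wa; rewrite (eqP wc) E1 eqxx.
    by rewrite (eqP wc) (suA c (NnA cN)).
Qed.

End Step.

Theorem corollary5p2 (W : finType) (A : {set W}) (e : rel W)
  (A' : {set W}) (e' : rel W) (k : nat) :
  simple_graph A e -> proliferated A e A' e' ->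
  linear_quotients A (matching_gens e k) ->
  linear_quotients A' (matching_gens e' k).
Proof.
move=> sgH P.
suff HH : and (simple_graph A' e')
  (linear_quotients A (matching_gens e k) -> linear_quotients A' (matching_gens e' k)) by case: HH.
elim: P => [|A1 e1 A2 e2 _ [sg1 IH] [a [b [N [aA nb dNA eA e'E]]]]]; first by split.
split; first exact: (sgG sg1 nb dNA eA e'E).
by move=> LQ; apply: (step_LQ sg1 aA nb dNA eA e'E); apply: IH.
Qed.
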